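(* Let $(G,L,v)$ be a reachable triple and $i\in[4]$ a color. Then one of the following holds: (1) $P(G,L,v,i,D)=\frac12$ for all integers $D\ge2$; (2) $P(G,L,v,i,D)\le\frac{13}{27}$ for all integers $D\ge 2$, and specifically $P(G,L,v,i,D)\le\frac{6}{13}$ when $\deg_G(v)\le1$. Furthermore, when $P(G,L,v,i,D)=\frac12$ for some integer $D\ge2$, one of the following three cases occurs: (a) $\deg_G(v)=0$ and $j,w\notin L(v)$ for two distinct colors $j,w$ other than $i$; (b) $\deg_G(v)=1$ and, denoting by $u$ the neighbor of $v$, $i\notin L(u)$ and $j\notin L(u)\cup L(v)$ for some color $j\neq i$; (c) $\deg_G(v)=2$ and, denoting by $u_1,u_2$ the two neighbors of $v$, the vertices $v,u_1,u_2$ form a triangle and $i\notin L(u_1)\cup L(u_2)$.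
   Context: Colors are $[4]=\{1,2,3,4\}$. A list-coloring instance $(G,L)$ is a finite simple graph $G=(V,E)$ with $L:V\to 2^{[4]}$. For a vertex $v$, $G_v$ is $G$ with $v$ and its incident edges removed, and $G_{v,w}=(G_v)_w$. If $v$ has neighbors $v_1,\dots,v_d$ (in a fixed order), then for $k\in[d]$ and a color $j$, $L_{k,j}$ is the list assignment on $G_v$ with $L_{k,j}(v_\ell)=L(v_\ell)\setminus\{j\}$ for $\ell<k$ and $L_{k,j}(u)=L(u)$ for all other vertices $u$ (so $L_{1,j}=L$). A triple $(G,L,v)$ with $v\in V$ is reachable if $\deg_G(u)\le3$ and $|L(u)|\ge\deg_G(u)+1$ for every $u\in V$, and moreover $\deg_G(v)\le2$ and $|L(v)|\ge\deg_G(v)+2$. The procedure $P(G,L,v,i,D)$ ($i\in[4]$, $D$ an integer) is defined recursively (empty products equal $1$): (a) If $i\notin L(v)$, return $0$. Otherwise, if $D\le 0$ or $\deg_G(v)=0$, return $1/|L(v)|$. (b) If $\deg_G(v)=1$ with neighbor $v_1$: let $x=P(G_v,L,v_1,i,D-1)$. If $|L(v)|=2$, say $L(v)=\{i,j\}$, let $y=P(G_v,L,v_1,j,D-1)$ and return $\frac{1-x}{2-x-y}$. If $|L(v)|=4$, return $\frac{1-x}{3}$. If $|L(v)|=3$, let $j$ be the unique color in $[4]\setminus L(v)$, $y=P(G_v,L,v_1,j,D-1)$, and return $\frac{1-x}{2+y}$. (c) If $\deg_G(v)=2$: order its neighbors $v_1,v_2$ so that $\deg_G(v_1)\ge\deg_G(v_2)$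 and, if $\deg_G(v_1)=\deg_G(v_2)=1$, so that $i\notin L(v_1)$ implies $i\notin L(v_2)$. Let $u_1,\dots,u_{d_1}$ be the neighbors of $v_1$ in $G_v$ (fixed order) and for $k\in[d_1]$, $w\in[4]$ let $L'_{k,w}$ be the list assignment on $G_{v,v_1}$ with $L'_{k,w}(u_\ell)=L(u_\ell)\setminus\{w\}$ for $\ell<k$ and $L'_{k,w}(u)=L(u)$ otherwise. Set $x_{k,w}=P(G_{v,v_1},L'_{k,w},u_k,w,D-1)$ for $k\in[d_1]$, $w\in L(v_1)$. For $j\in L(v)$ set $f_j=0$ if $j\notin L(v_1)$ and otherwise $f_j=\frac{\prod_{k=1}^{d_1}(1-x_{k,j})}{\sum_{w\in L(v_1)}\prod_{k=1}^{d_1}(1-x_{k,w})}$, and set $y_j=P(G_v,L_{2,j},v_2,j,D-1)$. Return $\frac{(1-f_i)(1-y_i)}{\sum_{j\in L(v)}(1-f_j)(1-y_j)}$. (d) If $\deg_G(v)=3$ with neighbors $v_1,v_2,v_3$: for $j\in L(v)$ let $x_j=P(G_v,L_{1,j},v_1,j,D-1)$, $y_j=P(G_v,L_{2,j},v_2,j,D-1)$, $z_j=P(G_v,L_{3,j},v_3,j,D-1)$, and return $\frac{(1-x_i)(1-y_i)(1-z_i)}{\sum_{j\in L(v)}(1-x_j)(1-y_j)(1-z_j)}$. For reachable triples, all recursive calls are again on reachable triples and case (d) never occurs. *)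

(* Defs.v *)
(* Colors [4] = {1,2,3,4} are represented by 'I_4 = {0,1,2,3}. *)
From HB Require Import structures.
From mathcomp Require Import all_boot all_order all_algebra.
Set Implicit Arguments. Unset Strict Implicit. Unset Printing Implicit Defensive.
Import Order.TTheory GRing.Theory Num.Theory.
Local Open Scope ring_scope.

(* A finite simple graph: a finite vertex set (a seq of nat labels; duplicates
   are irrelevant) and an edge predicate; adjacency is symmetrized and made
   irreflexive and restricted to the vertex set. *)
Record graph := Graph { gV : seq nat; gE : nat -> nat -> bool }.

Definition adj (G : graph) (u w : nat) : bool :=
  [&& u \in gV G, w \in gV G, u != w & (gE G u w || gE G w u)].

Definition nbrs (G : graph) (v : nat) : seq nat := [seq w <- undup (gV G) | adj G v w].
Definition deg (G : graph) (v : nat) : nat := size (nbrs G v).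

Definition delv (G : graph) (v : nat) : graph := Graph (filter (predC1 v) (gV G)) (gE G).

Definition color := 'I_4.
Definition lists := nat -> {set color}.

(* L_{k+1,w} w.r.t. the neighbour list us (0-indexed k): remove w from the
   lists of the first k vertices of us. *)
Definition remove_before (us : seq nat) (k : nat) (w : color) (L : lists) : lists :=
  fun u => if u \in take k us then L u :\ w else L u.

(* "fixed order" of neighbours: an arbitrary ordering rule, required to list
   exactly the neighbours of v (see valid_order). *)
Definition order_fun := graph -> nat -> seq nat.
Definition valid_order (pk : order_fun) : Prop :=
  forall G v, perm_eq (pk G v) (nbrs G v).

(* The procedure P(G,L,v,i,D), for D : nat (D <= 0 is represented by D = 0). *)
Fixpoint P (pk : order_fun) (D : nat) (G : graph) (L : lists) (v : nat) (i : color)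
  {struct D} : rat :=
  if i \notin L v then 0 else
  match D with
  | 0%N => (#|L v|%:R)^-1
  | D'.+1 =>
    match pk G v with
    | [::] => (#|L v|%:R)^-1
    | [:: v1] =>
      let Gv := delv G v in
      let x := P pk D' Gv L v1 i in
      if #|L v| == 2%N then
        let y := P pk D' Gv L v1 (odflt i [pick j in L v :\ i]) in
        (1 - x) / (2 - x - y)
      else if #|L v| == 4%N then (1 - x) / 3
      else
        let y := P pk D' Gv L v1 (odflt i [pick j in ~: L v]) in
        (1 - x) / (2 + y)
    | [:: a; b] =>
      let sw := (deg G a < deg G b)%N ||
                [&& deg G a == 1%N, deg G b == 1%N, i \notin L a & i \in L b] in
      let v1 := if sw then b else a in
      let v2 := if sw then a else b in
      let Gv := delv G v in
      let Gvv := delv Gv v1 in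
      let us := pk Gv v1 in
      let g (w : color) := \prod_(k < size us)
          (1 - P pk D' Gvv (remove_before us k w L) (nth 0%N us k) w) in
      let f (j : color) := if j \in L v1 then g j / (\sum_(w in L v1) g w) else 0 in
      let y (j : color) := P pk D' Gv (remove_before [:: v1; v2] 1 j L) v2 j in
      (1 - f i) * (1 - y i) / (\sum_(j in L v) (1 - f j) * (1 - y j))
    | us =>
      let Gv := delv G v in
      let h (j : color) := \prod_(k < size us)
          (1 - P pk D' Gv (remove_before us k j L) (nth 0%N us k) j) in
      h i / (\sum_(j in L v) h j)
    end
  end.

Definition reachable (G : graph) (L : lists) (v : nat) : Prop :=
  (forall u, u \in gV G -> (deg G u <= 3)%N /\ (deg G u + 1 <= #|L u|)%N) /\
  [/\ v \in gV G, (deg G v <= 2)%N & (deg G v + 2 <= #|L v|)%N].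

(* Main.v *)
Require Import Defs.
From HB Require Import structures.
From mathcomp Require Import all_boot all_order all_algebra.
From mathcomp Require Import zify ring lra.
Import Order.TTheory GRing.Theory Num.Theory.
Set Implicit Arguments. Unset Strict Implicit. Unset Printing Implicit Defensive.
Local Open Scope ring_scope.

Lemma adj_sym G u w : adj G u w = adj G w u.
Proof. by rewrite /adj; case: (u \in gV G); case: (w \in gV G); rewrite //= eq_sym orbC. Qed.

Lemma adj_gV G u w : adj G u w -> (u \in gV G) && (w \in gV G).
Proof. by case/and4P=> -> ->. Qed.

Lemma adj_neq G u w : adj G u w -> u != w.
Proof. by case/and4P. Qed.

Lemma mem_nbrs G u w : (w \in nbrs G u) = adj G u w.
Proof.
rewrite /nbrs mem_filter mem_undup; apply/andP/idP => [[//]|H]; split=> //.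
by case/andP: (adj_gV H).
Qed.

Lemma uniq_nbrs G u : uniq (nbrs G u).
Proof. by rewrite /nbrs filter_uniq // undup_uniq. Qed.

Lemma in_delv G x w : (w \in gV (delv G x)) = (w != x) && (w \in gV G).
Proof. by rewrite /delv /= mem_filter. Qed.

Lemma adj_delv G x u w : adj (delv G x) u w = [&& adj G u w, u != x & w != x].
Proof.
rewrite /adj !in_delv /=.
by case: (u == x); case: (w == x); case: (u \in gV G); case: (w \in gV G); rewrite ?andbF ?andbT.
Qed.

Lemma nbrs_delv G x u : u != x -> nbrs (delv G x) u = filter (predC1 x) (nbrs G u).
Proof.
move=> ux; rewrite /nbrs /delv /= filter_undup -filter_predI.
rewrite -filter_predI -filter_undup.
apply: eq_filter => w /=.
rewrite -[Graph _ _]/(delv G x) adj_delv ux /=.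
by rewrite -andbA andbb andbC.
Qed.

Lemma deg_delv G x u : u != x -> deg (delv G x) u = (deg G u - adj G u x)%N.
Proof.
move=> ux; rewrite /deg nbrs_delv // size_filter.
have := count_predC (pred1 x) (nbrs G u).
rewrite (count_uniq_mem _ (uniq_nbrs G u)) mem_nbrs.
have -> : count (predC (pred1 x)) (nbrs G u) = count (predC1 x) (nbrs G u) by [].
by move=> <-; rewrite addKn.
Qed.

Lemma deg_delv_le G x u : (deg (delv G x) u <= deg G u)%N.
Proof.
case: (eqVneq u x) => [->|ux]; last by rewrite deg_delv //; lia.
rewrite /deg /nbrs; rewrite (@eq_in_filter _ _ pred0); first by rewrite filter_pred0.
by move=> w _; rewrite adj_delv eqxx /= andbF.
Qed.

Section PK.
Variable pk : order_fun.
Hypothesis Hpk : valid_order pk.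

Lemma size_pk G v : size (pk G v) = deg G v.
Proof. exact: perm_size (Hpk G v). Qed.
Lemma mem_pk G v w : (w \in pk G v) = adj G v w.
Proof. by rewrite (perm_mem (Hpk G v)) mem_nbrs. Qed.
Lemma uniq_pk G v : uniq (pk G v).
Proof. by rewrite (perm_uniq (Hpk G v)) uniq_nbrs. Qed.
End PK.

Definition okG (G : graph) (L : lists) := forall u, u \in gV G ->
  (deg G u <= 3)%N /\ (deg G u + 1 <= #|L u|)%N.

Lemma ok_sub G L H (L' : lists) : okG G L ->
  (forall u, u \in gV H -> [/\ u \in gV G, (deg H u <= deg G u)%N &
      (#|L u| <= #|L' u| + (deg G u - deg H u))%N]) -> okG H L'.
Proof.
move=> ok Hs u uH; case: (Hs u uH) => uG d1 d2; case: (ok u uG) => d3 d4; lia.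
Qed.

Lemma cardD1_ge (A : {set color}) w : (#|A| <= #|A :\ w| + 1)%N.
Proof. rewrite (cardsD1 w A); case: (w \in A) => /=; lia. Qed.

Lemma card_le4 (A : {set color}) : (#|A| <= 4)%N.
Proof. by have := max_card A; rewrite card_ord. Qed.

Lemma reach_nb G L v v1 : reachable G L v -> adj G v v1 -> reachable (delv G v) L v1.
Proof.
move=> [ok [vG dv lv]] a1; split.
  apply: (ok_sub ok) => u; rewrite in_delv => /andP[uv uG]; split=> //.
    exact: deg_delv_le.
  lia.
have v1v : v1 != v by rewrite eq_sym (adj_neq a1).
have v1G : v1 \in gV G by case/andP: (adj_gV a1).
rewrite in_delv v1v v1G deg_delv // adj_sym a1; case: (ok v1 v1G) => d1 d2.
have : (0 < deg G v1)%N.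
  by rewrite /deg -has_predT; apply/hasP; exists v => //; rewrite mem_nbrs adj_sym.
split=> //; lia.
Qed.

Lemma deg_pos G u w : adj G u w -> (0 < deg G u)%N.
Proof. by move=> a; rewrite /deg -has_predT; apply/hasP; exists w => //; rewrite mem_nbrs. Qed.

Lemma deg_drop G u w : adj G u w -> (deg (delv G w) u + 1 = deg G u)%N.
Proof.
move=> a; rewrite deg_delv ?(adj_neq a) // a; have := deg_pos a; lia.
Qed.

Lemma rb_in us k w (L : lists) u : u \in take k us -> remove_before us k w L u = L u :\ w.
Proof. by rewrite /remove_before => ->. Qed.
Lemma rb_notin us k w (L : lists) u : u \notin take k us -> remove_before us k w L u = L u.
Proof. by rewrite /remove_before => /negbTE ->. Qed.

Lemma reach_y G L v v1 v2 j : reachable G L v -> adj G v v1 -> adj G v v2 -> v1 != v2 ->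
  reachable (delv G v) (remove_before [:: v1; v2] 1 j L) v2.
Proof.
move=> [ok [vG dv lv]] a1 a2 n12.
have R2 := reach_nb (conj ok (And3 vG dv lv)) a2.
case: R2 => _ [H1 H2 H3]; split; last first.
  by split=> //; rewrite rb_notin //= inE eq_sym.
apply: (ok_sub ok) => u; rewrite in_delv => /andP[uv uG]; split=> //.
  exact: deg_delv_le.
case: (eqVneq u v1) => [->|uv1].
  rewrite rb_in /= ?inE ?eqxx //.
  have := deg_drop (w := v) (u := v1) (G := G); rewrite adj_sym => /(_ a1).
  move=> h; rewrite -h addKn; exact: cardD1_ge.
rewrite rb_notin /= ?inE //; lia.
Qed.

Lemma reach_x pk G L v v1 k w : valid_order pk -> reachable G L v -> adj G v v1 ->
  (k < size (pk (delv G v) v1))%N ->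
  reachable (delv (delv G v) v1) (remove_before (pk (delv G v) v1) k w L)
     (nth 0%N (pk (delv G v) v1) k).
Proof.
move=> Hpk [ok [vG dv lv]] a1 ks.
set us := pk (delv G v) v1.
have v1v : v1 != v by rewrite eq_sym (adj_neq a1).
have Hin : forall u, u \in us -> [/\ adj G v1 u, u != v & u != v1].
  move=> u; rewrite /us (mem_pk Hpk) adj_delv => /and3P[a _ uv]; split=> //.
  by rewrite eq_sym (adj_neq a).
have Hdeg : forall u, u \in us -> (deg (delv (delv G v) v1) u + 1 <= deg G u)%N.
  move=> u uus; case: (Hin u uus) => a uv uv1.
  have : adj (delv G v) u v1 by rewrite adj_delv adj_sym a uv.
  by move/deg_drop => ->; exact: deg_delv_le.
have tus : nth 0%N us k \in us by exact: mem_nth.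
have tnt : nth 0%N us k \notin take k us.
  by rewrite in_take // index_uniq ?ltnn // /us (uniq_pk Hpk).
case: (Hin _ tus) => ta tv tv1.
have tG : nth 0%N us k \in gV G by case/andP: (adj_gV ta).
split.
  apply: (ok_sub ok) => u; rewrite !in_delv => /andP[uv1 /andP[uv uG]]; split=> //.
    exact: (leq_trans (deg_delv_le _ _ _) (deg_delv_le _ _ _)).
  case Ht: (u \in take k us).
    rewrite rb_in //; have := Hdeg u (mem_take Ht); move=> h2; apply: (leq_trans (cardD1_ge (L u) w)).
    by rewrite leq_add2l subn_gt0 -addn1.
  rewrite rb_notin ?Ht //; lia.
rewrite !in_delv tv1 tv tG rb_notin //; have := Hdeg _ tus.
case: (ok _ tG) => h1 h2 h3; split=> //; lia.
Qed.

Definition swb G (L : lists) (i : color) a b :=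
  (deg G a < deg G b)%N || [&& deg G a == 1%N, deg G b == 1%N, i \notin L a & i \in L b].

Definition gW (pk : order_fun) D G (L : lists) v v1 (w : color) : rat :=
  \prod_(k < size (pk (delv G v) v1))
     (1 - P pk D (delv (delv G v) v1) (remove_before (pk (delv G v) v1) k w L)
                 (nth 0%N (pk (delv G v) v1) k) w).
Definition fW (pk : order_fun) D G (L : lists) v v1 (j : color) : rat :=
  if j \in L v1 then gW pk D G L v v1 j / (\sum_(w in L v1) gW pk D G L v v1 w) else 0.
Definition yW (pk : order_fun) D G (L : lists) v v1 v2 (j : color) : rat :=
  P pk D (delv G v) (remove_before [:: v1; v2] 1 j L) v2 j.
Definition R2 (f y : color -> rat) (A : {set color}) (i : color) :=
  (1 - f i) * (1 - y i) / (\sum_(j in A) (1 - f j) * (1 - y j)).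

Lemma P_deg2 (pk : order_fun) D G (L : lists) v (i : color) a b : i \in L v -> pk G v = [:: a; b] ->
  P pk D.+1 G L v i =
  R2 (fW pk D G L v (if swb G L i a b then b else a))
     (yW pk D G L v (if swb G L i a b then b else a) (if swb G L i a b then a else b))
     (L v) i.
Proof. by move=> Hi Hp; rewrite /= Hi Hp. Qed.

Lemma P_notin pk D G (L : lists) v i : i \notin L v -> P pk D G L v i = 0.
Proof. by case: D => [|D] /= ->. Qed.

Lemma P_D0 pk G (L : lists) v i : i \in L v -> P pk 0 G L v i = (#|L v|%:R)^-1.
Proof. by move=> /= ->. Qed.

Lemma P_deg0 pk D G (L : lists) v i : i \in L v -> pk G v = [::] ->
  P pk D G L v i = (#|L v|%:R)^-1.
Proof. by case: D => [|D] /= -> // ->. Qed.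

Lemma P_deg1_4 pk D G (L : lists) v i v1 : i \in L v -> pk G v = [:: v1] -> #|L v| = 4%N ->
  P pk D.+1 G L v i = (1 - P pk D (delv G v) L v1 i) / 3.
Proof. by move=> /= -> -> ->. Qed.

Lemma compl_uniq (A : {set color}) j k : #|A| = 3%N -> j \notin A -> k \notin A -> j = k.
Proof.
move=> cA jA kA; have : #|~: A| = 1%N by have := cardsC A; rewrite card_ord cA; lia.
move/eqP/cards1P => [x Hx].
by move: jA kA; rewrite -!in_setC Hx !inE => /eqP -> /eqP ->.
Qed.

Lemma P_deg1_3 pk D G (L : lists) v i v1 k : i \in L v -> pk G v = [:: v1] -> #|L v| = 3%N ->
  k \notin L v ->
  P pk D.+1 G L v i = (1 - P pk D (delv G v) L v1 i) / (2 + P pk D (delv G v) L v1 k).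
Proof.
move=> /= Hi Hp Hc Hk; rewrite Hi Hp Hc /=.
case: pickP => [k' Hk'|H0]; first by rewrite (compl_uniq Hc Hk (_ : k' \notin L v)) // -in_setC.
by move: (H0 k); rewrite in_setC Hk.
Qed.

Lemma sum_rest_ge (F : color -> rat) (A : {set color}) j c :
  (forall w, c <= F w) -> c *+ #|A :\ j| <= \sum_(w in A | w != j) F w.
Proof.
move=> Hc; rewrite (eq_bigl (mem (A :\ j))); last by move=> w; rewrite !inE andbC.
by rewrite -sumr_const; apply: ler_sum => w _.
Qed.

Lemma sum_rest_le (F : color -> rat) (A : {set color}) j c :
  (forall w, F w <= c) -> \sum_(w in A | w != j) F w <= c *+ #|A :\ j|.
Proof.
move=> Hc; rewrite (eq_bigl (mem (A :\ j))); last by move=> w; rewrite !inE andbC.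
by rewrite -sumr_const; apply: ler_sum => w _.
Qed.

Definition fD (g : color -> rat) (A : {set color}) (j : color) : rat :=
  if j \in A then g j / (\sum_(w in A) g w) else 0.

Lemma pow_half_ge n : (n <= 2)%N -> 4%:R^-1 <= (2%:R^-1 : rat) ^+ n.
Proof. case: n => [|[|[|n]]] h; rewrite ?expr0 ?expr1 ?expr2; [lra|lra|lra|exfalso; lia]. Qed.

Lemma HR_arith n (m : rat) : (n <= 2)%N -> (n.+1)%:R <= m -> 3%:R/4%:R <= (2%:R^-1)^+n * m.
Proof. case: n => [|[|[|n]]] h hm; rewrite ?expr0 ?expr1 ?expr2; [lra|lra|lra|exfalso; lia]. Qed.

Lemma f_upper (gj R : rat) : gj <= 1 -> 3%:R/4%:R <= R -> 0 < gj -> 0 <= gj / (gj + R) <= 4/7.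
Proof.
move=> h1 h2 h3; apply/andP; split; first by apply: divr_ge0; lra.
rewrite ler_pdivrMr; [lra|lra].
Qed.

Lemma f_lower (gj R c : rat) : 4%:R^-1 <= c -> c <= gj -> R <= 3%:R -> 0 <= R -> 1/13 <= gj / (gj + R).
Proof. move=> h1 h2 h3 h4; rewrite ler_pdivlMr; [lra|lra]. Qed.

Lemma fD_props (g : color -> rat) (A : {set color}) (n : nat) :
  (n <= 2)%N -> (n + 2 <= #|A|)%N -> (forall w, (2%:R^-1) ^+ n <= g w <= 1) ->
  [/\ forall j, 0 <= fD g A j <= 4/7, \sum_j fD g A j = 1 &
      forall j, j \in A -> 1/13 <= fD g A j].
Proof.
move=> n2 nA Hg.
have c0 : 0 < (2%:R^-1 : rat) ^+ n by apply: exprn_gt0.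
have g0 : forall w, 0 < g w by move=> w; case/andP: (Hg w) => h _; exact: lt_le_trans h.
have Hsplit : forall j, j \in A -> \sum_(w in A) g w = g j + \sum_(w in A | w != j) g w.
  by move=> j jA; rewrite (bigD1 j).
have cA : forall j, j \in A -> #|A :\ j| = (#|A| - 1)%N by move=> j jA; rewrite (cardsD1 j A) jA; lia.
have HR : forall j, j \in A -> 3%:R/4%:R <= \sum_(w in A | w != j) g w.
  move=> j jA; apply: le_trans (sum_rest_ge _ j (fun w => proj1 (andP (Hg w)))).
  rewrite (cA j jA) -[_ *+ (#|A| - 1)]mulr_natr; apply: HR_arith => //.
  rewrite ler_nat; lia.
have HR2 : forall j, j \in A -> \sum_(w in A | w != j) g w <= 3%:R.
  move=> j jA; apply: le_trans (sum_rest_le _ j (fun w => proj2 (andP (Hg w)))) _.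
  rewrite (cA j jA) -mulr_natr mul1r ler_nat; have := card_le4 A; lia.
have R0 : forall j, 0 <= \sum_(w in A | w != j) g w.
  by move=> j; apply: sumr_ge0 => w _; apply: ltW.
have S0 : forall j, j \in A -> 0 < \sum_(w in A) g w.
  move=> j jA; rewrite (Hsplit j jA); apply: ltr_pwDl; [exact: g0 | exact: R0].
split.
- move=> j; rewrite /fD; case: ifP => jA; last by apply/andP; split; lra.
  rewrite (Hsplit j jA); apply: f_upper; [exact: proj2 (andP (Hg j)) | exact: HR | exact: g0].
- have [j0 jA0] : exists j0, j0 \in A by apply/set0Pn; rewrite -card_gt0; lia.
  rewrite (bigID (mem A)) /= [X in _ + X]big1 ?addr0; last by move=> j /negbTE; rewrite /fD => ->.
  rewrite (eq_bigr (fun j => g j / \sum_(w in A) g w)); last by move=> j; rewrite /fD => ->.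
  by rewrite -mulr_suml divff // gt_eqF // (S0 j0 jA0).
- move=> j jA; rewrite /fD jA (Hsplit j jA).
  apply: (f_lower (pow_half_ge n2)); [exact: proj1 (andP (Hg j)) | exact: HR2 | exact: R0].
Qed.

Lemma prod_bounds n (F : 'I_n -> rat) : (forall k, 0 <= F k <= 1/2) ->
  (2%:R^-1) ^+ n <= \prod_(k < n) (1 - F k) <= 1.
Proof.
move=> HF; apply/andP; split.
  rewrite -[n in _ ^+ n]card_ord -prodr_const; apply: ler_prod => k _.
  by case/andP: (HF k) => h1 h2; apply/andP; split; lra.
apply: prodr_ile1 => k _; case/andP: (HF k) => h1 h2; apply/andP; split; lra.
Qed.

Definition Bo (f y : color -> rat) (i : color) := \sum_(j | j != i) (1 - f j) * (1 - y j).

Lemma R2_split f y (A : {set color}) i : (forall j, j \in A) ->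
  R2 f y A i = (1 - f i) * (1 - y i) / ((1 - f i) * (1 - y i) + Bo f y i).
Proof.
move=> HA; rewrite /R2 /Bo.
have -> : \sum_(j in A) (1 - f j) * (1 - y j) = \sum_j (1 - f j) * (1 - y j).
  by apply: eq_bigl => j; rewrite HA.
by rewrite (bigD1 i).
Qed.

Lemma sum_others (f : color -> rat) i : \sum_j f j = 1 -> \sum_(j | j != i) (1 - f j) = 2 + f i.
Proof.
move=> Hs; rewrite sumrB sumr_const.
have : \sum_(j | j != i) f j = 1 - f i by rewrite -Hs [in RHS](bigD1 i) //= addrC addrK.
move=> ->; rewrite cardC1 card_ord /=; lra.
Qed.

Lemma Bo_bounds f y i : (forall j, 0 <= f j <= 1) -> (forall j, 0 <= y j <= 1/2) ->
  \sum_j f j = 1 -> (2 + f i) / 2 <= Bo f y i <= 2 + f i.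
Proof.
move=> Hf Hy Hs; rewrite -(sum_others i Hs); apply/andP; split.
  rewrite mulr_suml; apply: ler_sum => j _.
  case/andP: (Hf j) => h1 h2; case/andP: (Hy j) => h3 h4.
  apply: ler_wpM2l; lra.
apply: ler_sum => j _; case/andP: (Hf j) => h1 h2; case/andP: (Hy j) => h3 h4.
apply: ler_piMr; lra.
Qed.

Lemma Bo_lb f y i (a : color) (al be : rat) : \sum_j f j = 1 -> f i = 0 -> a != i ->
  (forall j, j != i -> al * (1 - f j) - (j == a)%:R * be <= (1 - f j) * (1 - y j)) ->
  2 * al - be <= Bo f y i.
Proof.
move=> Hs fi ai H; apply: le_trans (ler_sum _ H).
rewrite sumrB -mulr_sumr sum_others // fi -mulr_suml.
rewrite (bigD1 a) //= eqxx big1 ?addr0; first by rewrite mulr1n; lra.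
by move=> j /andP[_ /negbTE ->].
Qed.

Lemma full4 (A : {set color}) : (4 <= #|A|)%N -> forall j, j \in A.
Proof.
move=> h j; have : #|~: A| = 0%N by have := cardsC A; rewrite card_ord; have := card_le4 A; lia.
move/cards0_eq => H; apply/negPn; rewrite -in_setC H inE //.
Qed.

Lemma sw_deg G L i a b :
  (deg G (if swb G L i a b then a else b) <= deg G (if swb G L i a b then b else a))%N.
Proof.
rewrite /swb; case: ltnP => [h|h] /=; first exact: ltnW.
by case: ifP => // /and4P[/eqP -> /eqP -> _ _].
Qed.

Definition UBP (pk : order_fun) D := forall G L v i, reachable G L v -> 0 <= P pk D G L v i <= 1/2.

Lemma deg2_setup pk D G L v i a b : valid_order pk -> UBP pk D ->
  reachable G L v -> pk G v = [:: a; b] ->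
  let v1 := if swb G L i a b then b else a in
  let v2 := if swb G L i a b then a else b in
  [/\ [/\ adj G v v1, adj G v v2, v1 != v2, (deg G v2 <= deg G v1)%N & forall j, j \in L v],
      [/\ forall j, 0 <= fW pk D G L v v1 j <= 4/7, \sum_j fW pk D G L v v1 j = 1 &
          forall j, j \in L v1 -> 1/13 <= fW pk D G L v v1 j],
      forall j, j \notin L v1 -> fW pk D G L v v1 j = 0 &
      forall j, 0 <= yW pk D G L v v1 v2 j <= 1/2].
Proof.
move=> Hpk UB Hr Ep v1 v2.
have ua : uniq [:: a; b] by rewrite -Ep (uniq_pk Hpk).
have aa : adj G v a by rewrite -(mem_pk Hpk) Ep inE eqxx.
have ab : adj G v b by rewrite -(mem_pk Hpk) Ep !inE eqxx orbT.
have nab : a != b by move: ua; rewrite /= inE andbT.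
have a1 : adj G v v1 by rewrite /v1; case: ifP.
have a2 : adj G v v2 by rewrite /v2; case: ifP.
have n12 : v1 != v2 by rewrite /v1 /v2; case: ifP; rewrite // eq_sym.
have dv : deg G v = 2%N by rewrite -(size_pk Hpk) Ep.
have Lv : forall j, j \in L v by apply: full4; case: Hr => _ [_ _]; rewrite dv.
have R1 := reach_nb Hr a1.
split.
- split=> //; exact: sw_deg.
- set n := size (pk (delv G v) v1).
  have hn : n = deg (delv G v) v1 by rewrite /n (size_pk Hpk).
  case: R1 => _ [_ d1 l1].
  apply: (@fD_props _ _ n); [lia | lia | move=> w].
  apply: prod_bounds => k; apply: UB; exact: reach_x.
- by move=> j; rewrite /fW => /negbTE ->.
- move=> j; apply: UB; exact: reach_y.
Qed.

Lemma inv_card_bd n : (2 <= n)%N -> 0 <= (n%:R : rat)^-1 <= 1/2.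
Proof.
move=> h; apply/andP; split; first by rewrite invr_ge0.
rewrite mul1r lef_pV2 ?posrE ?ltr0n ?ler_nat //; lia.
Qed.

Lemma exists_notin (A : {set color}) : #|A| = 3%N -> exists k, k \notin A.
Proof.
move=> h; have : (0 < #|~: A|)%N by have := cardsC A; rewrite card_ord h; lia.
by case/card_gt0P => k; rewrite in_setC => ?; exists k.
Qed.

Lemma deg1_card G (L : lists) v : reachable G L v -> deg G v = 1%N ->
  #|L v| = 3%N \/ #|L v| = 4%N.
Proof. case=> _ [_ _ h] d; have := card_le4 (L v); lia. Qed.

Lemma UB pk : valid_order pk -> forall D, UBP pk D.
Proof.
move=> Hpk; elim=> [|D IH] G L v i Hr.
  case Hi: (i \in L v); last by rewrite P_notin ?Hi //; lra.
  rewrite P_D0 //; apply: inv_card_bd; case: Hr => _ [_ _]; lia.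
case Hi: (i \in L v); last by rewrite P_notin ?Hi //; lra.
case Ep: (pk G v) => [|a [|b [|c s]]].
- rewrite P_deg0 //; apply: inv_card_bd; case: Hr => _ [_ _]; lia.
- have aa : adj G v a by rewrite -(mem_pk Hpk) Ep inE eqxx.
  have R1 := reach_nb Hr aa.
  have dv : deg G v = 1%N by rewrite -(size_pk Hpk) Ep.
  case: (deg1_card Hr dv) => hc.
    have [k hk] := exists_notin hc.
    rewrite (P_deg1_3 _ Hi Ep hc hk).
    case/andP: (IH _ _ _ i R1) => h1 h2; case/andP: (IH _ _ _ k R1) => h3 h4.
    apply/andP; split; first by apply: divr_ge0; lra.
    rewrite ler_pdivrMr; lra.
  rewrite (P_deg1_4 _ Hi Ep hc).
  case/andP: (IH _ _ _ i R1) => h1 h2; apply/andP; split; lra.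
- rewrite (P_deg2 _ Hi Ep).
  have [[a1 a2 n12 d12 Lv] [Hf Hs Hf13] Hf0 Hy] := deg2_setup i Hpk (IH) Hr Ep.
  rewrite R2_split; last exact: Lv.
  set f := fW _ _ _ _ _ _ in Hf Hs Hf13 Hf0 *; set y := yW _ _ _ _ _ _ _ in Hy *.
  have Hf' : forall j, 0 <= f j <= 1.
    by move=> j; case/andP: (Hf j) => h1 h2; apply/andP; split; lra.
  case/andP: (Bo_bounds i Hf' Hy Hs) => hb1 hb2.
  case/andP: (Hf i) => h1 h2; case/andP: (Hy i) => h3 h4.
  have ha1 : 0 <= (1 - f i) * (1 - y i) by apply: mulr_ge0; lra.
  have ha2 : (1 - f i) * (1 - y i) <= 1 - f i by apply: ler_piMr; lra.
  apply/andP; split; first by apply: divr_ge0; lra.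
  rewrite ler_pdivrMr; lra.
- by have := size_pk Hpk G v; rewrite Ep /=; case: Hr => _ [_ h _]; lia.
Qed.

Lemma inv_card_lb n : (0 < n <= 4)%N -> 1/4 <= (n%:R : rat)^-1.
Proof.
move=> h; rewrite mul1r lef_pV2 ?posrE ?ltr0n ?ler_nat //; lia.
Qed.

Lemma LB pk D G L v i : valid_order pk -> reachable G L v -> i \in L v ->
  1/13 <= P pk D G L v i /\ ((deg G v <= 1)%N -> 1/6 <= P pk D G L v i).
Proof.
move=> Hpk Hr Hi.
have c4 := card_le4 (L v).
have c2 : (2 <= #|L v|)%N by case: Hr => _ [_ _]; lia.
have H4 : 1/4 <= (#|L v|%:R : rat)^-1 by apply: inv_card_lb; lia.
case: D => [|D].
  by rewrite (P_D0 _ _ Hi); split => [|_]; lra.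
case Ep: (pk G v) => [|a [|b [|c s]]].
- by rewrite (P_deg0 _ Hi Ep); split => [|_]; lra.
- have aa : adj G v a by rewrite -(mem_pk Hpk) Ep inE eqxx.
  have R1 := reach_nb Hr aa.
  have dv : deg G v = 1%N by rewrite -(size_pk Hpk) Ep.
  have IH := UB Hpk D.
  case: (deg1_card Hr dv) => hc.
    have [k hk] := exists_notin hc.
    rewrite (P_deg1_3 _ Hi Ep hc hk).
    case/andP: (IH _ _ _ i R1) => h1 h2; case/andP: (IH _ _ _ k R1) => h3 h4.
    suff : 1/5 <= (1 - P pk D (delv G v) L a i) / (2 + P pk D (delv G v) L a k).
      by move=> h; split => [|_]; lra.
    rewrite ler_pdivlMr; lra.
  rewrite (P_deg1_4 _ Hi Ep hc).
  case/andP: (IH _ _ _ i R1) => h1 h2; split => [|_]; lra.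
- rewrite (P_deg2 _ Hi Ep).
  have [[a1 a2 n12 d12 Lv] [Hf Hs Hf13] Hf0 Hy] := deg2_setup i Hpk (UB Hpk D) Hr Ep.
  have dv : deg G v = 2%N by rewrite -(size_pk Hpk) Ep.
  split; last by move=> h; exfalso; move: h; rewrite dv.
  rewrite R2_split; last exact: Lv.
  set f := fW _ _ _ _ _ _ in Hf Hs Hf13 Hf0 *; set y := yW _ _ _ _ _ _ _ in Hy *.
  have Hf' : forall j, 0 <= f j <= 1.
    by move=> j; case/andP: (Hf j) => h1 h2; apply/andP; split; lra.
  case/andP: (Bo_bounds i Hf' Hy Hs) => hb1 hb2.
  case/andP: (Hf i) => h1 h2; case/andP: (Hy i) => h3 h4.
  have ha1 : (1 - f i) / 2 <= (1 - f i) * (1 - y i).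
    by apply: ler_wpM2l; lra.
  rewrite ler_pdivlMr; lra.
- by have := size_pk Hpk G v; rewrite Ep /=; case: Hr => _ [_ h _]; lia.
Qed.

Lemma notin_card (A : {set color}) j : j \notin A -> (#|A| <= 3)%N.
Proof. move=> jA; case: (leqP #|A| 3) => // h; by rewrite full4 in jA. Qed.

Lemma P_zero pk D G (L : lists) v i : i \notin L v -> P pk D G L v i = 0.
Proof. exact: P_notin. Qed.

Lemma deg1_main pk D G L v i u : valid_order pk -> reachable G L v -> i \in L v ->
  pk G v = [:: u] ->
  [/\ [&& #|L v| == 3%N, i \notin L u & [exists k, (k \notin L v) && (k \notin L u)]] ->
        P pk D.+1 G L v i = 1/2,
      ~~ [&& #|L v| == 3%N, i \notin L u & [exists k, (k \notin L v) && (k \notin L u)]] ->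
        P pk D.+1 G L v i <= 6/13 &
      forall k, k \notin L v -> k \notin L u -> i \in L u -> P pk D.+1 G L v i <= 5/12].
Proof.
move=> Hpk Hr Hi Ep.
have aa : adj G v u by rewrite -(mem_pk Hpk) Ep inE eqxx.
have R1 := reach_nb Hr aa.
have dv : deg G v = 1%N by rewrite -(size_pk Hpk) Ep.
have IH := UB Hpk D.
have dU : forall c, c \notin L u -> (deg (delv G v) u <= 1)%N.
  by move=> c /notin_card; case: R1 => _ [_ _]; lia.
case: (deg1_card Hr dv) => hc; last first.
  rewrite (P_deg1_4 _ Hi Ep hc) hc /=.
  case/andP: (IH _ _ _ i R1) => h1 h2; split.
  - by move=> h; discriminate h.
  - move=> _; lra.
  - move=> k hk; exfalso; move: hk; rewrite full4 ?hc //.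
have [k hk] := exists_notin hc.
rewrite (P_deg1_3 _ Hi Ep hc hk) hc eqxx /=.
have Ek : [exists k, (k \notin L v) && (k \notin L u)] = (k \notin L u).
  apply/existsP/idP => [[k' /andP[h1 h2]]|h]; last by exists k; rewrite hk.
  by rewrite (compl_uniq hc hk h1).
rewrite Ek.
case/andP: (IH _ _ _ i R1) => h1 h2; case/andP: (IH _ _ _ k R1) => h3 h4.
split.
- by case/andP => hi hk'; rewrite (P_zero _ _ _ hi) (P_zero _ _ _ hk') subr0 addr0.
- rewrite negb_and negbK; case/orP => [hi|hk'].
    have := proj1 (LB D Hpk R1 hi) => hx.
    rewrite ler_pdivrMr; lra.
  case hi: (i \in L u).
    have := proj1 (LB D Hpk R1 hi) => hx.
    rewrite ler_pdivrMr; lra.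
  rewrite negbK in hk'; have := proj2 (LB D Hpk R1 hk') (dU i (negbT hi)) => hy.
  rewrite (P_zero _ _ _ (negbT hi)) ler_pdivrMr; lra.
- move=> k' hk1 hk2 hi; rewrite -(compl_uniq hc hk hk1) in hk2.
  have := proj2 (LB D Hpk R1 hi) (dU k hk2) => hx.
  rewrite (P_zero _ _ _ hk2) ler_pdivrMr; lra.
Qed.

Lemma three_missing (A : {set color}) x y z : x != y -> x != z -> y != z ->
  x \notin A -> y \notin A -> z \notin A -> (#|A| <= 1)%N.
Proof.
move=> xy xz yz xA yA zA.
have U : uniq [:: x; y; z] by rewrite /= !inE negb_or xy xz yz.
have sub : [:: x; y; z] \subset ~: A.
  by apply/subsetP => w; rewrite !inE => /or3P[] /eqP ->.
have h3 : (3 <= #|~: A|)%N by have := subset_leq_card sub; rewrite (card_uniqP U).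
have := cardsC A; rewrite card_ord; lia.
Qed.

Lemma pick_a (A : {set color}) i : (2 <= #|A|)%N -> i \notin A ->
  exists a, a != i /\ forall j, j != i -> j \notin A -> j = a.
Proof.
move=> cA iA.
case: (pickP [pred j | (j != i) && (j \notin A)]) => [a /andP[ai aA] | none].
  exists a; split => // j ji jA; case: (eqVneq j a) => // ja.
  have : (#|A| <= 1)%N.
    by apply: (three_missing (x:=i) (y:=a) (z:=j)); rewrite // eq_sym.
  lia.
have [a aA] : exists a, a \in A by apply/set0Pn; rewrite -card_gt0; lia.
exists a; split; first by apply: contraNneq iA => <-.
by move=> j ji jA; move: (none j) => /=; rewrite ji jA.
Qed.

Lemma exists_other (i : color) : exists a : color, a != i.
Proof.
exists (if i == ord0 then (ord_max : 'I_4) else ord0).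
by case: (eqVneq i ord0) => [->|h] //; rewrite eq_sym.
Qed.

Lemma exists_c (A : {set color}) i : #|A| = 2%N -> i \notin A -> exists c, c != i /\ c \notin A.
Proof.
move=> cA iA; have h1 : #|~: A| = 2%N by have := cardsC A; rewrite card_ord cA; lia.
have : (0 < #|~: A :\ i|)%N by have := cardsD1 i (~: A); rewrite h1 in_setC iA /=; lia.
by case/card_gt0P => c; rewrite !inE => /andP[ci cA']; exists c.
Qed.

Lemma ratio_A (A B : rat) : 0 <= A <= 12/13 -> 1 <= B -> A / (A + B) <= 13/27.
Proof. move=> /andP[h1 h2] h3; rewrite ler_pdivrMr; lra. Qed.

Lemma ratio_C (B : rat) : 14/13 <= B -> (1 - 0) * (1 - 0) / ((1 - 0) * (1 - 0) + B) <= 13/27.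
Proof. move=> h; rewrite !subr0 !mulr1 ler_pdivrMr; lra. Qed.

Ltac clear_rat := repeat match goal with
 | H : is_true (@Order.le _ _ _ _) |- _ => clear H
 | H : is_true (@Order.lt _ _ _ _) |- _ => clear H
 | H : forall _, is_true (@Order.le _ _ _ _) |- _ => clear H
 | H : forall _, _ -> is_true (@Order.le _ _ _ _) |- _ => clear H
 | H : @eq rat _ _ |- _ => clear H
 | H : forall _, @eq rat _ _ |- _ => clear H
 | H : forall _, _ -> @eq rat _ _ |- _ => clear H
 end.
Ltac nlia := clear_rat; lia.

Lemma le_lra (x y : rat) : x <= y -> y <= x -> x = y.
Proof. by move=> h1 h2; apply: le_anti; rewrite h1 h2. Qed.

Lemma deg2_main pk D G L v i a b : valid_order pk -> reachable G L v -> pk G v = [:: a; b] ->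
  forall v1 v2, v1 = (if swb G L i a b then b else a) -> v2 = (if swb G L i a b then a else b) ->
  ([&& i \notin L v1, i \notin L v2 & adj G v1 v2] -> P pk D.+2 G L v i = 1/2) /\
  (~~ [&& i \notin L v1, i \notin L v2 & adj G v1 v2] -> P pk D.+2 G L v i <= 13/27).
Proof.
move=> Hpk Hr Ep v1 v2 E1 E2.
have [[a1 a2 n12 _ Lv] [Hf Hs Hf13] Hf0 Hy] := deg2_setup i Hpk (UB Hpk D.+1) Hr Ep.
rewrite (P_deg2 _ (Lv i) Ep) R2_split; last exact: Lv.
rewrite -E1 -E2 in a1 a2 n12 Hf Hs Hf13 Hf0 Hy *.
set f := fW pk D.+1 G L v v1 in Hf Hs Hf13 Hf0 *.
set y := yW pk D.+1 G L v v1 v2 in Hy *.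
have Hf' : forall j, 0 <= f j <= 1.
  by move=> j; case/andP: (Hf j) => h1 h2; apply/andP; split; lra.
case/andP: (Bo_bounds i Hf' Hy Hs) => hb1 hb2.
case/andP: (Hf i) => hf1 hf2; case/andP: (Hy i) => hy1 hy2.
have L'v2 : forall j, remove_before [:: v1; v2] 1 j L v2 = L v2.
  by move=> j; rewrite rb_notin //= inE eq_sym.
have L'v1 : forall j, remove_before [:: v1; v2] 1 j L v1 = L v1 :\ j.
  by move=> j; rewrite rb_in //= inE eqxx.
have Ry : forall j, reachable (delv G v) (remove_before [:: v1; v2] 1 j L) v2.
  by move=> j; exact: reach_y.
case hi1: (i \in L v1).
  split => [h|_]; first by discriminate h.
  apply: ratio_A; last lra.
  have := Hf13 i hi1 => h.
  apply/andP; split; first by apply: mulr_ge0; lra.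
  apply: le_trans (_ : 1 - f i <= _); [apply: ler_piMr; lra | lra].
case hi2: (i \in L v2).
  split => [h|_]; first by discriminate h.
  have hyi : 1/13 <= y i by apply: (proj1 (LB _ Hpk (Ry i) _)); rewrite L'v2.
  apply: ratio_A; last lra.
  apply/andP; split; first by apply: mulr_ge0; lra.
  apply: le_trans (_ : 1 - y i <= _); [apply: ler_piMl; lra | lra].
have fi : f i = 0 by apply: Hf0; rewrite hi1.
have yi : y i = 0 by rewrite /y /yW P_zero // L'v2 hi2.
rewrite fi yi.
have v2G : v2 \in gV G by case/andP: (adj_gV a2).
have v1v : v1 != v by rewrite eq_sym (adj_neq a1).
have v2v : v2 != v by rewrite eq_sym (adj_neq a2).
case: Hr => okG _; have [d2a d2b] := okG v2 v2G.
have c2 := notin_card (negbT hi2).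
have a2' : adj G v2 v by rewrite adj_sym.
have dd := deg_drop a2'.
have dpos := deg_pos a2'.
case: (ltnP (deg G v2) 2) => hd.
  have d0 : deg (delv G v) v2 = 0%N by nlia.
  have E0 : pk (delv G v) v2 = [::] by apply: size0nil; rewrite (size_pk Hpk).
  have nT : ~~ adj G v1 v2.
    apply/negP => h12; have : adj (delv G v) v2 v1 by rewrite adj_delv adj_sym h12 v1v v2v.
    move/deg_pos; nlia.
  split; first by move=> /and3P[_ _ h]; move: nT; rewrite h.
  move=> _; apply: ratio_C.
  have yv : forall j, y j = if j \in L v2 then (#|L v2|%:R)^-1 else 0.
    move=> j; rewrite /y /yW; case: ifP => hj.
      by rewrite (P_deg0 _ _ E0) L'v2 // hj.
    by rewrite P_zero // L'v2 hj.
  case: (eqVneq #|L v2| 3%N) => c3.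
    have [a0 a0i] := exists_other i.
    have HB : 2 * (2/3) - 0 <= Bo f y i.
      apply: (Bo_lb Hs fi a0i) => j ji.
      rewrite mulr0 subr0 yv; case/andP: (Hf' j) => h1 h2; case: ifP => _.
        rewrite c3 [X in _ <= X]mulrC; apply: ler_wpM2r; lra.
      rewrite subr0 mulr1; lra.
    lra.
  have c2' : #|L v2| = 2%N by nlia.
  have [c [ci cL]] := exists_c c2' (negbT hi2).
  have HB : 2 * (1/2) - (-(3/14)) <= Bo f y i.
    apply: (Bo_lb Hs fi ci) => j ji.
    rewrite yv; case: (eqVneq j c) => [->|jc].
      rewrite (negbTE cL) /= mulr1n mul1r subr0 mulr1.
      case/andP: (Hf c) => h1 h2; lra.
    rewrite /= mulr0n mul0r subr0; case/andP: (Hf' j) => h1 h2; case: ifP => _.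
      rewrite c2' [X in _ <= X]mulrC; apply: ler_wpM2r; lra.
    rewrite subr0 mulr1; lra.
  lra.
have d1 : deg (delv G v) v2 = 1%N by nlia.
have [u Eu] : exists u, pk (delv G v) v2 = [:: u].
  move: (size_pk Hpk (delv G v) v2); rewrite d1; case: (pk _ _) => [|u [|]] // _.
  by exists u.
have au : adj (delv G v) v2 u by rewrite -(mem_pk Hpk) Eu inE eqxx.
have c3 : #|L v2| = 3%N by nlia.
have jin : forall j, j != i -> j \in remove_before [:: v1; v2] 1 j L v2.
  move=> j ji; rewrite L'v2; apply/negPn/negP => h; move: ji.
  by rewrite (compl_uniq c3 h (negbT hi2)) eqxx.
have Tu : adj G v1 v2 = (u == v1).
  have : (v1 \in pk (delv G v) v2) = adj G v1 v2.
    by rewrite (mem_pk Hpk) adj_delv adj_sym v1v v2v !andbT.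
  by rewrite Eu inE eq_sym => <-.
rewrite Tu.
case: (eqVneq u v1) => [Euv|nuv].
  split => [_|]; last by move=> h; discriminate h.
  have yh : forall j, j != i -> y j = 1/2.
    move=> j ji; case: (deg1_main D Hpk (Ry j) (jin j ji) Eu) => H1 _ _; apply: H1.
    rewrite L'v2 c3 eqxx Euv L'v1 setD11 /=; apply/existsP; exists i.
    by rewrite !inE hi2 hi1 andbF.
  have HB : Bo f y i = 1.
    rewrite /Bo (eq_bigr (fun j => (1 - f j) * (1 - 1/2))); last first.
      by move=> j ji; rewrite (yh j ji).
    rewrite -mulr_suml sum_others // fi; apply: le_lra; lra.
  by rewrite HB !subr0 !mulr1.
split => [h|_]; first by discriminate h.
apply: ratio_C.
have L'u : forall j, remove_before [:: v1; v2] 1 j L u = L u.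
  by move=> j; rewrite rb_notin //= inE.
case hiu: (i \in L u).
  have [a0 a0i] := exists_other i.
  have HB : 2 * (7/13) - 0 <= Bo f y i.
    apply: (Bo_lb Hs fi a0i) => j ji; rewrite mulr0 subr0.
    have hy : y j <= 6/13.
      case: (deg1_main D Hpk (Ry j) (jin j ji) Eu) => _ H2 _; apply: H2.
      rewrite L'v2 L'u c3 eqxx /=; apply/negP => /andP[_ /existsP[k /andP[k1 k2]]].
      by move: k2; rewrite (compl_uniq c3 k1 (negbT hi2)) hiu.
    case/andP: (Hf' j) => h1 h2; case/andP: (Hy j) => h3 h4.
    rewrite [X in _ <= X]mulrC; apply: ler_wpM2r; lra.
  lra.
have uG : u \in gV G.
  by move: au; rewrite adj_delv => /and3P[/adj_gV /andP[_ h] _ _].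
have Lu2 : (2 <= #|L u|)%N.
  have auG : adj G u v2 by move: au; rewrite adj_delv adj_sym => /and3P[].
  have h1 := deg_pos auG; have [h2 h3] := okG u uG; clear -h1 h3; lia.
have [a0 [a0i Ha]] := pick_a Lu2 (negbT hiu).
have HB : 2 * (7/12) - 1/12 <= Bo f y i.
  apply: (Bo_lb Hs fi a0i) => j ji.
  case hju: (j \in L u).
    have hy : y j <= 5/12.
      case: (deg1_main D Hpk (Ry j) (jin j ji) Eu) => _ _ H3; apply: (H3 i).
      - by rewrite L'v2 hi2.
      - by rewrite L'u hiu.
      - by rewrite L'u hju.
    case/andP: (Hf' j) => h1 h2; case/andP: (Hy j) => h3 h4.
    have hp : 7/12 * (1 - f j) <= (1 - f j) * (1 - y j).
      rewrite [X in _ <= X]mulrC; apply: ler_wpM2r; lra.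
    have hind : 0 <= (j == a0)%:R * (1/12 : rat) by apply: mulr_ge0; [apply: ler0n | lra].
    lra.
  rewrite (Ha j ji (negbT hju)) eqxx /= mulr1n mul1r.
  case/andP: (Hf' a0) => h1 h2; case/andP: (Hy a0) => h3 h4.
  have hp : (1 - f a0) / 2 <= (1 - f a0) * (1 - y a0) by apply: ler_wpM2l; lra.
  lra.
lra.
Qed.

Lemma nothalf (x c : rat) : x <= c -> c < 1/2 -> x <> 1/2.
Proof. move=> h1 h2 h3; rewrite h3 in h1; have := le_lt_trans h1 h2; by rewrite ltxx. Qed.

Lemma D2 (Q : nat -> Prop) : (forall D, Q D.+2) -> forall D, (2 <= D)%N -> Q D.
Proof. by move=> h [|[|D]]. Qed.

Lemma inv_le3 n : (3 <= n)%N -> (n%:R : rat)^-1 <= 1/3.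
Proof. move=> h; rewrite mul1r lef_pV2 ?posrE ?ltr0n ?ler_nat //; lia. Qed.

Lemma two_missing (A : {set color}) i : #|A| = 2%N -> i \in A ->
  exists j w : color, [/\ j != w, j != i, w != i, j \notin A & w \notin A].
Proof.
move=> cA iA; have : #|~: A| == 2%N by have := cardsC A; rewrite card_ord cA => /eqP; rewrite eqn_leq => /andP[h1 h2]; apply/eqP; lia.
case/cards2P => j [w [jw EA]].
have jA : j \notin A by rewrite -in_setC EA !inE eqxx.
have wA : w \notin A by rewrite -in_setC EA !inE eqxx orbT.
exists j, w; split => //.
- by apply: contraNneq jA => ->.
- by apply: contraNneq wA => ->.
Qed.

Theorem theorem11 (pk : order_fun) (G : graph) (L : lists) (v : nat) (i : color) :
  valid_order pk -> reachable G L v ->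
  ((forall D, (2 <= D)%N -> P pk D G L v i = 1 / 2) \/
   ((forall D, (2 <= D)%N -> P pk D G L v i <= 13 / 27) /\
    ((deg G v <= 1)%N -> forall D, (2 <= D)%N -> P pk D G L v i <= 6 / 13))) /\
  ((exists D, (2 <= D)%N /\ P pk D G L v i = 1 / 2) ->
    (deg G v = 0%N /\
       exists j w : color, [/\ j != w, j != i, w != i, j \notin L v & w \notin L v]) \/
    (deg G v = 1%N /\
       exists u, [/\ adj G v u, i \notin L u &
                    exists j : color, [/\ j != i, j \notin L u & j \notin L v]]) \/
    (deg G v = 2%N /\
       exists u1 u2, [/\ adj G v u1, adj G v u2, adj G u1 u2 & i \notin L u1 :|: L u2])).
Proof.
move=> Hpk Hr.
case Hi: (i \in L v); last first.
  have P0 : forall D, P pk D G L v i = 0 by move=> D; rewrite P_zero ?Hi.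
  split.
    right; split; first by move=> D _; rewrite P0; lra.
    by move=> _ D _; rewrite P0; lra.
  case=> D [_ h]; exfalso; apply: (nothalf (c := 0) _ _ h); rewrite ?P0; lra.
case Ep: (pk G v) => [|a [|b [|c s]]].
- have dv : deg G v = 0%N by rewrite -(size_pk Hpk) Ep.
  have PD : forall D, P pk D G L v i = (#|L v|%:R)^-1 by move=> D; rewrite (P_deg0 _ Hi Ep).
  have c4 := card_le4 (L v).
  have c2 : (2 <= #|L v|)%N by case: Hr => _ [_ _]; rewrite dv.
  case: (eqVneq #|L v| 2%N) => hc.
    split; first by left => D _; rewrite PD hc mul1r.
    move=> _; left; split => //; exact: two_missing.
  have h3 : (#|L v|%:R : rat)^-1 <= 1/3 by apply: inv_le3; lia.
  split.
    right; split; first by move=> D _; rewrite PD; lra.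
    by move=> _ D _; rewrite PD; lra.
  case=> D [_ h]; exfalso; apply: (nothalf (c := 1/3) _ _ h); rewrite ?PD; lra.
- have dv : deg G v = 1%N by rewrite -(size_pk Hpk) Ep.
  have aa : adj G v a by rewrite -(mem_pk Hpk) Ep inE eqxx.
  set S := [&& #|L v| == 3%N, i \notin L a & [exists k, (k \notin L v) && (k \notin L a)]].
  case HS: S.
    split.
      left; apply: D2 => D; case: (deg1_main D.+1 Hpk Hr Hi Ep) => H1 _ _; exact: H1.
    move=> _; right; left; split => //; exists a; move: HS; rewrite /S => /and3P[_ h1 /existsP[k /andP[k1 k2]]].
    split => //; exists k; split => //.
    by apply: contraNneq k1 => ->.
  have HB : forall D, (2 <= D)%N -> P pk D G L v i <= 6/13.
    apply: D2 => D; case: (deg1_main D.+1 Hpk Hr Hi Ep) => _ H2 _; apply: H2; by rewrite -/S HS.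
  split.
    right; split => [D hD|_]; last exact: HB.
    have := HB D hD; lra.
  case=> D [hD h]; exfalso; apply: (nothalf (HB D hD) _ h); lra.
- have dv : deg G v = 2%N by rewrite -(size_pk Hpk) Ep.
  have aa : adj G v a by rewrite -(mem_pk Hpk) Ep inE eqxx.
  have ab : adj G v b by rewrite -(mem_pk Hpk) Ep !inE eqxx orbT.
  set v1 := if swb G L i a b then b else a.
  set v2 := if swb G L i a b then a else b.
  have a1 : adj G v v1 by rewrite /v1; case: ifP.
  have a2 : adj G v v2 by rewrite /v2; case: ifP.
  have DM := fun D => deg2_main D Hpk Hr Ep (erefl v1) (erefl v2).
  case HT: [&& i \notin L v1, i \notin L v2 & adj G v1 v2].
    split.
      left; apply: D2 => D; case: (DM D) => H1 _; exact: H1.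
    move=> _; right; right; split => //; exists v1, v2.
    move: HT => /and3P[h1 h2 h3]; split => //.
    by rewrite in_setU negb_or h1 h2.
  have HB : forall D, (2 <= D)%N -> P pk D G L v i <= 13/27.
    by apply: D2 => D; case: (DM D) => _ H2; apply: H2; rewrite HT.
  split.
    right; split => [|h]; first exact: HB.
    by exfalso; move: h; rewrite dv.
  case=> D [hD h]; exfalso; apply: (nothalf (HB D hD) _ h); lra.
- by have := size_pk Hpk G v; rewrite Ep /=; case: Hr => _ [_ h _]; lia.
Qed.
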